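(* Let $L,R$ be nonempty subsets of a group $G$ such that $\mathcal{W}(L)$ and $\mathcal{W}(R)$ are subgroups of $G$. Then $2\mathrm{S}(G;L,R)$ is strongly connected if and only if $G=\mathcal{W}(L)\mathcal{W}(R)$ and some element of $\bar{L}$ or of $\bar{R}$ is strongly connected to $e$.
   Context: For nonempty subsets $L,R$ of a group $G$, the two-sided group digraph $2\mathrm{S}(G;L,R)$ has vertex set $G$ and a directed arc $(g,h)$ if and only if $h=l^{-1}gr$ for some $l\in L$, $r\in R$. Write $\bar{L}=L\cup L^{-1}$, $\bar{R}=R\cup R^{-1}$. For nonempty $S$, $\mathcal{W}(S)$ is the set of elements expressible as finite products $s_1\cdots s_n$, $n\ge1$, $s_i\in S$. Vertex $g$ is strongly connected to $h$ if there are directed paths from $g$ to $h$ and from $h$ to $g$; the digraph is strongly connected if every pair of vertices is strongly connected. *)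

(* Defs.v *)
From Stdlib Require Import Relations.

Record Group := {
  carrier :> Type;
  gmul : carrier -> carrier -> carrier;
  gone : carrier;
  ginv : carrier -> carrier;
  gmul_assoc : forall x y z, gmul x (gmul y z) = gmul (gmul x y) z;
  gmul_1l : forall x, gmul gone x = x;
  gmul_1r : forall x, gmul x gone = x;
  gmul_Vl : forall x, gmul (ginv x) x = gone;
  gmul_Vr : forall x, gmul x (ginv x) = gone
}.

Arguments gmul {g}.
Arguments gone {g}.
Arguments ginv {g}.

Section Defs.
Variable G : Group.

Definition nonempty (S : G -> Prop) : Prop := exists x, S x.

Definition bar (S : G -> Prop) : G -> Prop := fun x => S x \/ S (ginv x).

Inductive W (S : G -> Prop) : G -> Prop :=
| W_base : forall s, S s -> W S s
| W_step : forall x s, W S x -> S s -> W S (gmul x s).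

Definition is_subgroup (H : G -> Prop) : Prop :=
  H gone /\ (forall x y, H x -> H y -> H (gmul x y)) /\
  (forall x, H x -> H (ginv x)).

Definition arc2S (L R : G -> Prop) (g h : G) : Prop :=
  exists l r, L l /\ R r /\ h = gmul (gmul (ginv l) g) r.

Definition dpath (L R : G -> Prop) : relation G :=
  clos_refl_trans G (arc2S L R).

Definition strongly_connected_to (L R : G -> Prop) (g h : G) : Prop :=
  dpath L R g h /\ dpath L R h g.

Definition strongly_connected_2S (L R : G -> Prop) : Prop :=
  forall g h : G, strongly_connected_to L R g h.

Definition is_product_of (A B : G -> Prop) : Prop :=
  forall g : G, exists a b, A a /\ B b /\ g = gmul a b.

End Defs.

(* Main.v *)
Require Import Defs.
From Stdlib Require Import Relations Lia Arith.

Section Aux.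
Variable G : Group.

Lemma inv_uniq (x y : G) : gmul x y = gone -> y = ginv x.
Proof.
  intro H. rewrite <- (gmul_1l G y), <- (gmul_Vl G x), <- gmul_assoc, H, gmul_1r. reflexivity.
Qed.

Lemma inv_mul (x y : G) : ginv (gmul x y) = gmul (ginv y) (ginv x).
Proof.
  symmetry. apply inv_uniq.
  rewrite !gmul_assoc, <- (gmul_assoc G x y (ginv y)), gmul_Vr, gmul_1r, gmul_Vr. reflexivity.
Qed.

Lemma inv_inv (x : G) : ginv (ginv x) = x.
Proof. symmetry. apply inv_uniq. apply gmul_Vl. Qed.

Lemma inv_one : ginv (@gone G) = gone.
Proof. symmetry. apply inv_uniq. apply gmul_1l. Qed.

Lemma cancel1 (u x : G) : gmul (gmul u (ginv x)) x = u.
Proof. rewrite <- gmul_assoc, gmul_Vl, gmul_1r. reflexivity. Qed.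

Lemma cancel2 (u x : G) : gmul (gmul u x) (ginv x) = u.
Proof. rewrite <- gmul_assoc, gmul_Vr, gmul_1r. reflexivity. Qed.

Inductive Pn (S : G -> Prop) : nat -> G -> Prop :=
| Pn0 : Pn S 0 gone
| PnS : forall k x s, Pn S k x -> S s -> Pn S (Datatypes.S k) (gmul x s).

Lemma Pn_add S i j x y : Pn S i x -> Pn S j y -> Pn S (i + j) (gmul x y).
Proof.
  intros Hx Hy. induction Hy.
  - rewrite gmul_1r, Nat.add_0_r. exact Hx.
  - rewrite gmul_assoc. replace (i + Datatypes.S k) with (Datatypes.S (i + k)) by lia.
    constructor; assumption.
Qed.

Fixpoint pw (w : G) (t : nat) : G :=
  match t with 0 => gone | Datatypes.S t => gmul w (pw w t) end.

Lemma Pn_pw S p w t : Pn S p w -> Pn S (p * t) (pw w t).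
Proof.
  intro H. induction t; simpl.
  - rewrite Nat.mul_0_r. constructor.
  - replace (p * Datatypes.S t) with (p + p * t) by ring. apply Pn_add; assumption.
Qed.

Lemma pw_one t : pw gone t = gone.
Proof. induction t; simpl; [reflexivity| rewrite IHt, gmul_1l; reflexivity]. Qed.

Lemma Pn_pad S j b n t : Pn S j b -> Pn S n gone -> Pn S (j + n * t) b.
Proof.
  intros Hb He. replace b with (gmul b (pw gone t)) by (rewrite pw_one, gmul_1r; reflexivity).
  apply Pn_add; [assumption| apply Pn_pw; assumption].
Qed.

Lemma W_Pn S x : W G S x -> exists k, Pn S (Datatypes.S k) x.
Proof.
  intro H. induction H.
  - exists 0. rewrite <- (gmul_1l G s). constructor; [constructor|assumption].
  - destruct IHW as [k Hk]. exists (Datatypes.S k). constructor; assumption.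
Qed.

Lemma Pn_W S k x : is_subgroup G (W G S) -> Pn S k x -> W G S x.
Proof.
  intros [H1 [H2 H3]] H. induction H.
  - exact H1.
  - apply W_step; assumption.
Qed.

Lemma reach_char L R g h : dpath G L R g h ->
  exists k a b, Pn L k a /\ Pn R k b /\ h = gmul (gmul (ginv a) g) b.
Proof.
  intro H. induction H as [x y Ha | x | x y z _ IH1 _ IH2].
  - destruct Ha as [l [r [Hl [Hr ->]]]].
    exists 1, (gmul gone l), (gmul gone r).
    split; [constructor; [constructor|assumption]|].
    split; [constructor; [constructor|assumption]|].
    rewrite !gmul_1l. reflexivity.
  - exists 0, gone, gone. split; [constructor|]. split; [constructor|].
    rewrite inv_one, gmul_1l, gmul_1r. reflexivity.
  - destruct IH1 as [k1 [a1 [b1 [Ha1 [Hb1 ->]]]]].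
    destruct IH2 as [k2 [a2 [b2 [Ha2 [Hb2 ->]]]]].
    exists (k1 + k2), (gmul a1 a2), (gmul b1 b2).
    split; [apply Pn_add; assumption|]. split; [apply Pn_add; assumption|].
    rewrite inv_mul, !gmul_assoc. reflexivity.
Qed.

Lemma reach_of L R k a b g : Pn L k a -> Pn R k b ->
  dpath G L R g (gmul (gmul (ginv a) g) b).
Proof.
  intro Ha. revert b. induction Ha as [| k x s Hx IH Hs]; intros b Hb.
  - inversion Hb; subst. rewrite inv_one, gmul_1l, gmul_1r. apply rt_refl.
  - inversion Hb; subst. eapply rt_trans. apply (IH x0). assumption.
    apply rt_step. exists s, s0. split; [assumption|]. split; [assumption|].
    rewrite inv_mul, !gmul_assoc. reflexivity.
Qed.

Lemma key S1 S2 (w : G) q n i j a b :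
  Pn S1 (Datatypes.S q) w -> Pn S2 q w -> Pn S2 (Datatypes.S n) gone ->
  Pn S1 i a -> Pn S2 j b ->
  exists c, (exists k, Pn S1 k (gmul c a) /\ Pn S2 k (gmul c b)) /\
            (exists k, Pn S1 k (gmul a c) /\ Pn S2 k (gmul b c)).
Proof.
  intros Hw1 Hw2 He Ha Hb.
  pose (j' := j + Datatypes.S n * i).
  assert (Hb' : Pn S2 j' b) by (apply Pn_pad; assumption).
  assert (Hij : i <= j') by (unfold j'; simpl; lia).
  pose (t := j' - i).
  assert (Hc1 := Pn_pw S1 _ w t Hw1). assert (Hc2 := Pn_pw S2 _ w t Hw2).
  assert (E : q * t + j' = Datatypes.S q * t + i) by (unfold t; simpl; lia).
  exists (pw w t). split.
  - exists (Datatypes.S q * t + i). split. apply Pn_add; assumption.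
    rewrite <- E. apply Pn_add; assumption.
  - exists (i + Datatypes.S q * t). split. apply Pn_add; assumption.
    replace (i + Datatypes.S q * t) with (j' + q * t) by lia. apply Pn_add; assumption.
Qed.

Lemma key_both L R :
  is_subgroup G (W G L) -> is_subgroup G (W G R) ->
  (exists w q, (Pn L (Datatypes.S q) w /\ Pn R q w) \/ (Pn R (Datatypes.S q) w /\ Pn L q w)) ->
  forall a b, W G L a -> W G R b ->
  exists c, (exists k, Pn L k (gmul c a) /\ Pn R k (gmul c b)) /\
            (exists k, Pn L k (gmul a c) /\ Pn R k (gmul b c)).
Proof.
  intros HL HR [w [q Hw]] a b Ha Hb.
  destruct (W_Pn _ _ Ha) as [i Hi]. destruct (W_Pn _ _ Hb) as [j Hj].
  destruct Hw as [[H1 H2]|[H1 H2]].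
  - destruct (W_Pn _ _ (proj1 HR)) as [n Hn]. exact (key L R w q n _ _ a b H1 H2 Hn Hi Hj).
  - destruct (W_Pn _ _ (proj1 HL)) as [n Hn].
    destruct (key R L w q n _ _ b a H1 H2 Hn Hj Hi) as [c [[k [A1 A2]] [k' [B1 B2]]]].
    exists c. split; [exists k | exists k']; split; assumption.
Qed.

Lemma eqA (c d x : G) : x = gmul (gmul (ginv c) gone) d -> d = gmul c x.
Proof. intros ->. rewrite gmul_1r, gmul_assoc, gmul_Vr, gmul_1l. reflexivity. Qed.

Lemma eqB (c d y : G) : gone = gmul (gmul (ginv c) y) d -> c = gmul y d.
Proof.
  intro H. transitivity (gmul c gone). symmetry; apply gmul_1r.
  rewrite H, !gmul_assoc, gmul_Vr, gmul_1l. reflexivity.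
Qed.

Lemma Pn_left S k x s : Pn S k x -> S s -> Pn S (Datatypes.S k) (gmul s x).
Proof.
  intros Hx Hs. change (Datatypes.S k) with (1 + k). apply Pn_add; [|assumption].
  rewrite <- (gmul_1l G s). constructor; [constructor|assumption].
Qed.

End Aux.

Theorem mainTheorem12 (G : Group) (L R : G -> Prop) :
  nonempty G L -> nonempty G R ->
  is_subgroup G (W G L) -> is_subgroup G (W G R) ->
  (strongly_connected_2S G L R <->
   (is_product_of G (W G L) (W G R) /\
    exists x, (bar G L x \/ bar G R x) /\ strongly_connected_to G L R x gone)).
Proof.
  intros [l0 Hl0] [r0 Hr0] HL HR. split.
  - intro HS. split.
    + intro g. destruct (HS gone g) as [Hp _].
      destruct (reach_char _ _ _ _ _ Hp) as [k [a [b [Ha [Hb ->]]]]].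
      exists (ginv a), b. split; [apply (proj2 (proj2 HL)); eapply Pn_W; eassumption|].
      split; [eapply Pn_W; eassumption|]. rewrite gmul_1r. reflexivity.
    + exists l0. split; [left; left; assumption| apply HS].
  - intros [Hprod [x [Hx [Hxe Hex]]]].
    assert (Hw : exists w q, (Pn G L (S q) w /\ Pn G R q w) \/ (Pn G R (S q) w /\ Pn G L q w)).
    { destruct Hx as [[Hx|Hx]|[Hx|Hx]].
      - destruct (reach_char _ _ _ _ _ Hex) as [k [c [d [Hc [Hd E]]]]].
        apply eqA in E. exists d, k. left. split; [rewrite E; constructor; assumption | assumption].
      - destruct (reach_char _ _ _ _ _ Hxe) as [k [c [d [Hc [Hd E]]]]].
        apply eqB in E. exists d, k. left. split; [|assumption].
        replace d with (gmul (ginv x) c). apply Pn_left; assumption.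
        rewrite E, gmul_assoc, gmul_Vl, gmul_1l. reflexivity.
      - destruct (reach_char _ _ _ _ _ Hxe) as [k [c [d [Hc [Hd E]]]]].
        apply eqB in E. exists c, k. right. split; [|assumption].
        rewrite E. apply Pn_left; assumption.
      - destruct (reach_char _ _ _ _ _ Hex) as [k [c [d [Hc [Hd E]]]]].
        apply eqA in E. exists c, k. right. split; [|assumption].
        replace c with (gmul d (ginv x)). constructor; assumption.
        rewrite E, cancel2. reflexivity. }
    assert (H1 : forall g, dpath G L R gone g /\ dpath G L R g gone).
    { intro g. destruct (Hprod g) as [a0 [b0 [Ha0 [Hb0 ->]]]]. split.
      - destruct (key_both G L R HL HR Hw (ginv a0) b0 (proj2 (proj2 HL) _ Ha0) Hb0)
          as [c [[k [A1 A2]] _]].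
        pose proof (reach_of _ _ _ _ _ _ gone A1 A2) as P.
        replace (gmul a0 b0) with (gmul (gmul (ginv (gmul c (ginv a0))) gone) (gmul c b0)).
        exact P.
        rewrite inv_mul, inv_inv, gmul_1r, !gmul_assoc, cancel1. reflexivity.
      - destruct (key_both G L R HL HR Hw a0 (ginv b0) Ha0 (proj2 (proj2 HR) _ Hb0))
          as [c [_ [k [A1 A2]]]].
        pose proof (reach_of _ _ _ _ _ _ (gmul a0 b0) A1 A2) as P.
        replace (@gone G) with (gmul (gmul (ginv (gmul a0 c)) (gmul a0 b0)) (gmul (ginv b0) c)).
        exact P.
        rewrite inv_mul, !gmul_assoc, cancel1, cancel2, gmul_Vl. reflexivity. }
    intros g h. split.
    + eapply rt_trans; [apply (proj2 (H1 g)) | apply (proj1 (H1 h))].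
    + eapply rt_trans; [apply (proj2 (H1 h)) | apply (proj1 (H1 g))].
Qed.
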